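(* For a complex double sequence $\{a_{kl}\}_{k,l\ge1}$ and integers $m,n\ge0$ let $Q_{m,n}:=[2^m,2^{m+1}]\times[2^n,2^{n+1}]$ and $A_{mn}:=\max_{(k,l)\in Q_{m,n}\cap\mathbb{N}^2}|a_{kl}|$. Let $T>0$. (a) For any sequence $\{a_{kl}\}\in GM^c_1$ with constant $C$, there exist $c,v>0$, depending only on $C$ and $T$, such that for every $(m,n)$, $m,n\ge1$, with $A_{m-1,n-1}\le T A_{mn}$, there exists a rectangle $Q'_{m-1,n-1}\subset Q_{m-1,n-1}$ of size $2^{m-v}\times2^{n-v}$ satisfying $$\Big|\sum_{(k,l)\in Q'_{m-1,n-1}\cap\mathbb{N}^2}a_{kl}\Big|>c\,2^{m+n}A_{mn}.$$ (b) For any sequence $\{a_{kl}\}\in GM^c_2$ with constant $C$, there exist $c,v>0$, depending only on $C$ and $T$, such that for every $(m,n)$, $m\ge0$, $n\ge1$, with $A_{m+1,n-1}\le T A_{mn}$, there exists a rectangle $Q'_{m+1,n-1}\subset Q_{m+1,n-1}$ of size $2^{m-v}\times2^{n-v}$ satisfying $$\Big|\sum_{(k,l)\in Q'_{m+1,n-1}\cap\mathbb{N}^2}a_{kl}\Big|>c\,2^{m+n}A_{mn}.$$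
   Context: $\Delta^{11}a_{mn}:=a_{mn}-a_{m+1,n}-a_{m,n+1}+a_{m+1,n+1}$. A double sequence $\{a_{mn}\}_{m,n\ge1}$ belongs to $GM^c_1$ (with constant $C$) if $a_{mn}\to0$ as $m+n\to\infty$ and for all $k,l\in\mathbb{N}$, $$\sum_{m=k}^{2k}\sum_{n=l}^{\infty}|\Delta^{11}a_{mn}|+\sum_{m=k}^{\infty}\sum_{n=l}^{2l}|\Delta^{11}a_{mn}|\le C|a_{kl}|;$$ it belongs to $GM^c_2$ (with constant $C$) if $a_{mn}\to0$ as $m+n\to\infty$ and for all $k,l$ the same left-hand side is $\le C|a_{2k,l}|$. A rectangle of size $\alpha\times\beta$ means a set $[s_1,s_1+\alpha]\times[t_1,t_1+\beta]$. *)

(* Defs.v *)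
From mathcomp Require Import all_boot all_order all_algebra.
From mathcomp Require Import all_classical all_reals all_analysis.
From mathcomp Require Import complex.
Set Implicit Arguments. Unset Strict Implicit. Unset Printing Implicit Defensive.
Import Order.TTheory GRing.Theory Num.Theory.
Local Open Scope ring_scope.

Section Defs.
Variable R : realType.

Definition cabs (z : R[i]) : R := complex.Re `|z|.

Definition D11 (a : nat -> nat -> R[i]) (m n : nat) : R[i] :=
  a m n - a m.+1 n - a m n.+1 + a m.+1 n.+1.

Definition gm_lhs (a : nat -> nat -> R[i]) (k l : nat) : \bar R :=
  (\sum_(k <= m < (2 * k).+1) \sum_(l <= n <oo) (cabs (D11 a m n))%:E
   + \sum_(k <= m <oo) \sum_(l <= n < (2 * l).+1) (cabs (D11 a m n))%:E)%E.

Definition tends0 (a : nat -> nat -> R[i]) : Prop :=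
  forall e : R, 0 < e -> exists N : nat, forall m n : nat,
    (1 <= m)%N -> (1 <= n)%N -> (N <= m + n)%N -> cabs (a m n) < e.

(* the classes GM^c_1 and GM^c_2 with constant C; a is indexed by k,l >= 1,
   the values at index 0 are irrelevant *)
Definition GM1 (C : R) (a : nat -> nat -> R[i]) : Prop :=
  tends0 a /\ forall k l : nat, (1 <= k)%N -> (1 <= l)%N ->
    (gm_lhs a k l <= (C * cabs (a k l))%:E)%E.

Definition GM2 (C : R) (a : nat -> nat -> R[i]) : Prop :=
  tends0 a /\ forall k l : nat, (1 <= k)%N -> (1 <= l)%N ->
    (gm_lhs a k l <= (C * cabs (a (2 * k)%N l))%:E)%E.

Definition Amax (a : nat -> nat -> R[i]) (m n : nat) : R :=
  \big[Num.max/0]_(2 ^ m <= k < (2 ^ m.+1).+1)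
    \big[Num.max/0]_(2 ^ n <= l < (2 ^ n.+1).+1) cabs (a k l).

Definition rect_in_Q (p q : nat) (s t al be : R) : Prop :=
  (2 ^+ p)%:R <= s /\ s + al <= (2 ^+ p.+1)%:R /\
  (2 ^+ q)%:R <= t /\ t + be <= (2 ^+ q.+1)%:R.

(* sum of a_{kl} over the lattice points of the rectangle
   [s, s+al] x [t, t+be], restricted to the lattice points of Q_{p,q}
   (equal to the full lattice sum when the rectangle lies in Q_{p,q}) *)
Definition rect_sum (a : nat -> nat -> R[i]) (p q : nat) (s t al be : R)
  : R[i] :=
  \sum_(2 ^ p <= k < (2 ^ p.+1).+1) \sum_(2 ^ q <= l < (2 ^ q.+1).+1)
     (if (s <= k%:R <= s + al) && (t <= l%:R <= t + be) then a k l else 0).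

End Defs.

(* Main.v *)
Require Import Defs.
From mathcomp Require Import all_boot all_order all_algebra.
From mathcomp Require Import all_classical all_reals all_analysis.
From mathcomp Require Import complex.
From mathcomp Require Import ring lra zify.
Import Order.TTheory GRing.Theory Num.Theory.
Local Open Scope ring_scope.
Local Open Scope complex_scope.


Lemma normE {R : realType} (z : R[i]) : `|z| = (cabs z)%:C.
Proof. by rewrite /cabs normc_def. Qed.

Lemma cabs_ge0 {R : realType} (z : R[i]) : 0 <= cabs z.
Proof. by rewrite -ler0c -normE. Qed.

Lemma cabs_le {R : realType} (x y : R[i]) : (cabs x <= cabs y) = (`|x| <= `|y|).
Proof. by rewrite !normE lecR. Qed.

Lemma cabsD {R : realType} (x y : R[i]) : cabs (x + y) <= cabs x + cabs y.
Proof. by rewrite -lecR rmorphD /= -!normE ler_normD. Qed.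

Lemma cabs_sym {R : realType} (x y : R[i]) : cabs (x - y) = cabs (y - x).
Proof. by apply: complexI; rewrite -!normE distrC. Qed.

Lemma cabs0 {R : realType} : cabs (0 : R[i]) = 0.
Proof. by apply: complexI; rewrite -normE normr0. Qed.

Lemma cabs_tri {R : realType} (x y z : R[i]) :
  cabs (x - z) <= cabs (x - y) + cabs (y - z).
Proof.
have -> : x - z = (x - y) + (y - z) by ring.
exact: cabsD.
Qed.

Lemma cabs_sum {R : realType} (I : Type) (r : seq I) (F : I -> R[i]) :
  cabs (\sum_(j <- r) F j) <= \sum_(j <- r) cabs (F j).
Proof.
elim: r => [|x r IH]; first by rewrite !big_nil cabs0.
rewrite !big_cons; have := cabsD (F x) (\sum_(j <- r) F j); lra.
Qed.

Lemma cabsN {R : realType} (x : R[i]) : cabs (- x) = cabs x.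
Proof. by apply: complexI; rewrite -!normE normrN. Qed.

Lemma tele {R : realType} (a : nat -> nat -> R[i]) i q N : (q <= N)%N ->
  a i q - a i.+1 q = \sum_(q <= j < N) D11 a i j + (a i N - a i.+1 N).
Proof.
elim: N => [|N IH] hq.
  by move: hq; rewrite leqn0 => /eqP ->; rewrite big_geq // add0r.
move: hq; rewrite leq_eqVlt => /orP [/eqP -> | hq].
  by rewrite big_geq // add0r.
rewrite big_nat_recr //= IH // /D11; ring.
Qed.

Lemma Hstep {R : realType} {a : nat -> nat -> R[i]} (h : tends0 a) i q :
  (1 <= i)%N ->
  ((cabs (a i q - a i.+1 q))%:E <= \sum_(q <= j <oo) (cabs (D11 a i j))%:E)%E.
Proof.
move=> i1; apply/lee_addgt0Pr => e e0.
have [N0 HN] := h (e/2) (divr_gt0 e0 (ltr0Sn _ 1)).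
set N := maxn (maxn N0 q) 1.
have hqN : (q <= N)%N by rewrite /N; lia.
rewrite (@tele _ a i q N hqN).
apply: (@le_trans _ _ ((\sum_(q <= j < N) cabs (D11 a i j) + e)%:E)).
  rewrite lee_fin.
  have h1 := HN i N i1 ltac:(rewrite /N; lia) ltac:(rewrite /N; lia).
  have h2 := HN i.+1 N ltac:(lia) ltac:(rewrite /N; lia) ltac:(rewrite /N; lia).
  have h3 := cabsD (\sum_(q <= j < N) D11 a i j) (a i N - a i.+1 N).
  have h4 := cabs_sum _ (index_iota q N) (D11 a i).
  have h5 := cabsD (a i N) (- a i.+1 N).
  rewrite cabsN in h5.
  lra.
rewrite EFinD leeD2r // -sumEFin.
by apply: nneseries_lim_ge => n _ _; rewrite lee_fin cabs_ge0.
Qed.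

Definition trn {R : realType} (a : nat -> nat -> R[i]) : nat -> nat -> R[i] :=
  fun i j => a j i.

Lemma D11_tr {R : realType} (a : nat -> nat -> R[i]) i j :
  D11 (trn a) i j = D11 a j i.
Proof. rewrite /D11 /trn; ring. Qed.

Lemma tends0_tr {R : realType} {a : nat -> nat -> R[i]} :
  tends0 a -> tends0 (trn a).
Proof.
move=> h e e0; have [N HN] := h e e0; exists N => m n m1 n1 hmn.
by rewrite /trn; apply: HN => //; lia.
Qed.

Lemma mono_start {R : realType} (f : nat -> \bar R) l0 q :
  (forall j, (0 <= f j)%E) -> (l0 <= q)%N ->
  (\sum_(q <= j <oo) f j <= \sum_(l0 <= j <oo) f j)%E.
Proof.
move=> f0 lq; rewrite (@nneseries_split _ f l0 (q - l0)); last by move=> *; exact: f0.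
rewrite subnKC //.
by apply: leeDr; apply: sume_ge0 => *; exact: f0.
Qed.

Lemma Vstep {R : realType} {a : nat -> nat -> R[i]} (h : tends0 a) p q :
  (1 <= q)%N ->
  ((cabs (a p q - a p q.+1))%:E <= \sum_(p <= i <oo) (cabs (D11 a i q))%:E)%E.
Proof.
move=> q1; have := Hstep (tends0_tr h) q p q1.
by under eq_eseriesr do rewrite D11_tr.
Qed.

Lemma Hsum {R : realType} {a : nat -> nat -> R[i]} (h : tends0 a) l0 p q :
  (1 <= p)%N -> (l0 <= q)%N -> forall d,
  ((cabs (a p q - a (p + d)%N q))%:E <=
    \sum_(p <= i < (p + d)%N) \sum_(l0 <= j <oo) (cabs (D11 a i j))%:E)%E.
Proof.
move=> p1 lq; elim => [|d IH].
  by rewrite addn0 subrr cabs0 big_geq.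
rewrite addnS big_nat_recr /=; last by lia.
apply: (@le_trans _ _ ((cabs (a p q - a (p+d)%N q) + cabs (a (p+d)%N q - a (p+d)%N.+1 q))%:E)).
  by rewrite lee_fin cabs_tri.
rewrite EFinD; apply: leeD => //.
apply: (le_trans (Hstep h (p + d)%N q _)); first by lia.
by apply: mono_start => // j; rewrite lee_fin cabs_ge0.
Qed.

Lemma Vsum {R : realType} {a : nat -> nat -> R[i]} (h : tends0 a) k0 p q :
  (1 <= q)%N -> (k0 <= p)%N -> forall e,
  ((cabs (a p q - a p (q + e)%N))%:E <=
    \sum_(q <= j < (q + e)%N) \sum_(k0 <= i <oo) (cabs (D11 a i j))%:E)%E.
Proof.
move=> q1 kp e; have := Hsum (tends0_tr h) k0 q p q1 kp e.
rewrite /trn.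
by under eq_bigr do under eq_eseriesr do rewrite D11_tr.
Qed.

Lemma Rect {R : realType} {a : nat -> nat -> R[i]} (h : tends0 a) k0 l0 p q d e :
  (1 <= k0)%N -> (1 <= l0)%N -> (k0 <= p)%N -> (l0 <= q)%N ->
  ((cabs (a p q - a (p + d)%N (q + e)%N))%:E <=
    \sum_(p <= i < (p + d)%N) \sum_(l0 <= j <oo) (cabs (D11 a i j))%:E +
    \sum_(q <= j < (q + e)%N) \sum_(k0 <= i <oo) (cabs (D11 a i j))%:E)%E.
Proof.
move=> k1 l1 kp lq.
apply: (@le_trans _ _ ((cabs (a p q - a (p+d)%N q) + cabs (a (p+d)%N q - a (p+d)%N (q+e)%N))%:E)).
  by rewrite lee_fin cabs_tri.
rewrite EFinD; apply: leeD.
  by apply: Hsum => //; lia.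
by apply: Vsum => //; lia.
Qed.

Lemma subrange {R : realType} (f : nat -> \bar R) m p p' n :
  (forall i, (0 <= f i)%E) -> (m <= p)%N -> (p <= p')%N -> (p' <= n)%N ->
  (\sum_(p <= i < p') f i <= \sum_(m <= i < n) f i)%E.
Proof.
move=> f0 h1 h2 h3.
rewrite (@big_cat_nat _ _ _ p m n) //=; last by lia.
rewrite (@big_cat_nat _ _ _ p' p n) //=.
apply: (@le_trans _ _ (\sum_(p <= i < p') f i + \sum_(p' <= i < n) f i)%E).
  by apply: leeDl; apply: sume_ge0 => *; exact: f0.
by apply: leeDr; apply: sume_ge0 => *; exact: f0.
Qed.

Lemma gmb {R : realType} (a : nat -> nat -> R[i]) k0 l0 p q d e :
  (k0 <= p)%N -> (p + d <= (2 * k0).+1)%N ->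
  (l0 <= q)%N -> (q + e <= (2 * l0).+1)%N ->
  (\sum_(p <= i < (p + d)%N) \sum_(l0 <= j <oo) (cabs (D11 a i j))%:E +
    \sum_(q <= j < (q + e)%N) \sum_(k0 <= i <oo) (cabs (D11 a i j))%:E
   <= gm_lhs a k0 l0)%E.
Proof.
move=> h1 h2 h3 h4; rewrite /gm_lhs; apply: leeD.
  apply: subrange => //; last by lia.
  by move=> i; apply: nneseries_ge0 => *; rewrite lee_fin cabs_ge0.
rewrite -(@nneseries_sum_nat _ q (q + e)%N (fun j i => (cabs (D11 a i j))%:E) k0);
  last by move=> *; rewrite lee_fin cabs_ge0.
apply: lee_nneseries => [i _ _|i _].
  by apply: sume_ge0 => *; rewrite lee_fin cabs_ge0.
apply: subrange => //; last by lia.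
by move=> *; rewrite lee_fin cabs_ge0.
Qed.

Lemma step {R : realType} {a : nat -> nat -> R[i]} (h : tends0 a) p q p' q' X :
  (1 <= p)%N -> (1 <= q)%N -> (p <= p' <= 2 * p)%N -> (q <= q' <= 2 * q)%N ->
  (gm_lhs a p q <= X%:E)%E -> cabs (a p q - a p' q') <= X.
Proof.
move=> p1 q1 /andP[pp1 pp2] /andP[qq1 qq2] hX.
have := Rect h p q p q (p' - p) (q' - q) p1 q1 (leqnn p) (leqnn q).
rewrite !subnKC // => H.
have G := (@gmb _ a p q p q (p' - p) (q' - q) (leqnn p) ltac:(lia) (leqnn q) ltac:(lia)).
rewrite !subnKC // in G.
have := le_trans (le_trans H G) hX.
by rewrite lee_fin.
Qed.

Lemma blocks {R : realType} (f : nat -> \bar R) b L M :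
  (\sum_(0 <= t < M) \sum_((b + t * L)%N <= i < (b + t * L + L)%N) f i
   = \sum_(b <= i < (b + M * L)%N) f i)%E.
Proof.
elim: M => [|M IH]; first by rewrite big_geq // mul0n addn0 big_geq.
rewrite big_nat_recr //= IH.
have E : (b + M.+1 * L = b + M * L + L)%N by rewrite mulSn; nia.
rewrite E [in RHS](@big_cat_nat _ _ _ (b + M * L)%N) //=; nia.
Qed.

Lemma ex_min {R : realType} (g : nat -> R) M : (0 < M)%N ->
  exists t, (t < M)%N /\ forall t', (t' < M)%N -> g t <= g t'.
Proof.
elim: M => [//|M IH] _.
case: M IH => [|M] IH.
  by exists 0%N; split => // t'; rewrite ltnS leqn0 => /eqP ->.
have [t [ht Ht]] := IH isT.
case: (leP (g t) (g M.+1)) => hM.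
  exists t; split; first by lia.
  move=> t'; rewrite ltnS leq_eqVlt => /orP [/eqP -> //|]; exact: Ht.
exists M.+1; split => // t'; rewrite ltnS leq_eqVlt => /orP [/eqP -> //|].
by move=> /Ht; apply: le_trans; apply: ltW.
Qed.

Lemma pigeon {R : realType} (g : nat -> R) M : (0 < M)%N ->
  exists t, (t < M)%N /\ M%:R * g t <= \sum_(0 <= t' < M) g t'.
Proof.
move=> M0; have [t [ht Ht]] := @ex_min _ g M M0; exists t; split => //.
apply: (@le_trans _ _ (\sum_(0 <= t' < M) g t)).
  by rewrite sumr_const_nat subn0 mulr_natl.
rewrite big_nat [X in _ <= X]big_nat; apply: ler_sum => i /andP[_ hi]; exact: Ht.
Qed.

Lemma core {R : realType} {a : nat -> nat -> R[i]} (h : tends0 a) k0 l0 Lf Lg M X :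
  (1 <= k0)%N -> (1 <= l0)%N -> (0 < M)%N -> (M * Lf <= k0)%N -> (M * Lg <= l0)%N ->
  (gm_lhs a k0 l0 <= X%:E)%E ->
  exists t u, (t < M)%N /\ (u < M)%N /\
   forall d e, (d <= Lf)%N -> (e <= Lg)%N ->
    M%:R * cabs (a (k0 + t * Lf)%N (l0 + u * Lg)%N
                 - a (k0 + t * Lf + d)%N (l0 + u * Lg + e)%N) <= X.
Proof.
move=> k1 l1 M0 hMf hMg hX.
pose F i := (\sum_(l0 <= j <oo) (cabs (D11 a i j))%:E)%E.
pose G j := (\sum_(k0 <= i <oo) (cabs (D11 a i j))%:E)%E.
have F0 i : (0 <= F i)%E.
  by apply: nneseries_ge0 => *; rewrite lee_fin cabs_ge0.
have G0 j : (0 <= G j)%E.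
  by apply: nneseries_ge0 => *; rewrite lee_fin cabs_ge0.
pose rm t := (\sum_((k0 + t * Lf)%N <= i < (k0 + t * Lf + Lf)%N) F i)%E.
pose cm u := (\sum_((l0 + u * Lg)%N <= j < (l0 + u * Lg + Lg)%N) G j)%E.
pose S1 := (\sum_(k0 <= i < (k0 + M * Lf)%N) F i)%E.
pose S2 := (\sum_(l0 <= j < (l0 + M * Lg)%N) G j)%E.
have Htot : (S1 + S2 <= X%:E)%E.
  apply: le_trans hX.
  exact: (@gmb _ a k0 l0 k0 l0 (M * Lf) (M * Lg) (leqnn _) ltac:(lia) (leqnn _) ltac:(lia)).
have S10 : (0 <= S1)%E by apply: sume_ge0 => *.
have S20 : (0 <= S2)%E by apply: sume_ge0 => *.
have S1X : (S1 <= X%:E)%E by apply: le_trans Htot; apply: leeDl.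
have S2X : (S2 <= X%:E)%E by apply: le_trans Htot; apply: leeDr.
have Hr t : (t < M)%N -> (0 <= rm t)%E /\ (rm t <= S1)%E.
  move=> ht; split; first by apply: sume_ge0 => *.
  apply: subrange => //; nia.
have Hc u : (u < M)%N -> (0 <= cm u)%E /\ (cm u <= S2)%E.
  move=> hu; split; first by apply: sume_ge0 => *.
  apply: subrange => //; nia.
have finr t : (t < M)%N -> rm t \is a fin_num.
  move=> ht; have [h1 h2] := Hr t ht; rewrite ge0_fin_numE //.
  by apply: (le_lt_trans h2); apply: (le_lt_trans S1X); exact: ltry.
have finc u : (u < M)%N -> cm u \is a fin_num.
  move=> hu; have [h1 h2] := Hc u hu; rewrite ge0_fin_numE //.
  by apply: (le_lt_trans h2); apply: (le_lt_trans S2X); exact: ltry.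
pose r t := fine (rm t).
pose c u := fine (cm u).
have ES1 : S1 = (\sum_(0 <= t < M) r t)%:E.
  rewrite -sumEFin /S1 -(blocks F k0 Lf M) big_nat [RHS]big_nat.
  by apply: eq_bigr => t /andP[_ ht]; rewrite /r fineK //; exact: finr.
have ES2 : S2 = (\sum_(0 <= u < M) c u)%:E.
  rewrite -sumEFin /S2 -(blocks G l0 Lg M) big_nat [RHS]big_nat.
  by apply: eq_bigr => u /andP[_ hu]; rewrite /c fineK //; exact: finc.
have Htot' : \sum_(0 <= t < M) r t + \sum_(0 <= u < M) c u <= X.
  by rewrite -lee_fin EFinD -ES1 -ES2.
have [t [ht Ht]] := @pigeon _ r M M0.
have [u [hu Hu]] := @pigeon _ c M M0.
exists t, u; split => //; split => // d e hd he.
have H1 := Rect h k0 l0 (k0 + t * Lf)%N (l0 + u * Lg)%N d e k1 l1 (leq_addr _ _) (leq_addr _ _).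
have H2 : (\sum_((k0 + t * Lf)%N <= i < (k0 + t * Lf + d)%N) F i <= (r t)%:E)%E.
  rewrite /r fineK; last exact: finr.
  by apply: subrange => //; [exact: leq_addr | rewrite leq_add2l].
have H3 : (\sum_((l0 + u * Lg)%N <= j < (l0 + u * Lg + e)%N) G j <= (c u)%:E)%E.
  rewrite /c fineK; last exact: finc.
  by apply: subrange => //; [exact: leq_addr | rewrite leq_add2l].
have H4 := le_trans H1 (leeD H2 H3).
rewrite lee_fin in H4.
have H5 := ler_wpM2l (ler0n R M) H4.
rewrite mulrDr in H5.
apply: (le_trans H5).
lra.
Qed.


Lemma bigmax_ge {R : realType} (r : seq nat) (F : nat -> R) x :
  x \in r -> F x <= \big[Num.max/0]_(i <- r) F i.
Proof.
elim: r => [//|y r IH]; rewrite in_cons big_cons => /orP [/eqP ->|hx].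
  by rewrite le_max lexx.
by rewrite le_max IH // orbT.
Qed.

Lemma bigmax_le {R : realType} (r : seq nat) (F : nat -> R) B :
  0 <= B -> (forall x, x \in r -> F x <= B) -> \big[Num.max/0]_(i <- r) F i <= B.
Proof.
move=> B0; elim: r => [|y r IH] H; first by rewrite big_nil.
rewrite big_cons ge_max H ?mem_head //= IH // => x hx.
by apply: H; rewrite in_cons hx orbT.
Qed.

Lemma Amax_ge {R : realType} (a : nat -> nat -> R[i]) m n k l :
  (2 ^ m <= k <= 2 ^ m.+1)%N -> (2 ^ n <= l <= 2 ^ n.+1)%N ->
  cabs (a k l) <= Amax a m n.
Proof.
move=> hk hl; rewrite /Amax.
have h1 := @bigmax_ge R (index_iota (2 ^ n) (2 ^ n.+1).+1) (fun l => cabs (a k l)) l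
  ltac:(by rewrite mem_index_iota ltnS).
have h2 := @bigmax_ge R (index_iota (2 ^ m) (2 ^ m.+1).+1)
  (fun k => \big[Num.max/0]_(2 ^ n <= l < (2 ^ n.+1).+1) cabs (a k l)) k
  ltac:(by rewrite mem_index_iota ltnS).
exact: le_trans h1 h2.
Qed.

Lemma Amax_le {R : realType} (a : nat -> nat -> R[i]) m n B :
  0 <= B -> (forall k l, (2 ^ m <= k <= 2 ^ m.+1)%N -> (2 ^ n <= l <= 2 ^ n.+1)%N ->
  cabs (a k l) <= B) -> Amax a m n <= B.
Proof.
move=> B0 H; rewrite /Amax; apply: bigmax_le => // k; rewrite mem_index_iota ltnS => hk.
apply: bigmax_le => // l; rewrite mem_index_iota ltnS => hl; exact: H.
Qed.

Definition fl (m v : nat) : nat := if (v <= m)%N then (2 ^ (m - v))%N else 0%N.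

Lemma Lbounds {R : realType} (m v : nat) :
  ((fl m v)%:R <= 2 `^ (m%:R - v%:R) :> R) /\
  (2 `^ (m%:R - v%:R) < (fl m v).+1%:R :> R) /\
  ((v <= m)%N -> 2 `^ (m%:R - v%:R) = (fl m v)%:R :> R) /\
  ((m < v)%N -> 2 `^ (m%:R - v%:R) < 1 :> R).
Proof.
rewrite /fl; case: leqP => hvm.
  have E : 2 `^ (m%:R - v%:R) = (2 ^ (m - v))%:R :> R.
    by rewrite -natrB // powR_mulrn ?natrX.
  rewrite E; split => //; split; first by rewrite ltr_nat.
  by split => // /(leq_trans hvm); rewrite ltnn.
have E : m%:R - v%:R = - (v - m)%N%:R :> R.
  by rewrite natrB ?opprB //; exact: ltnW.
have H1 : 2 `^ (m%:R - v%:R) < 1 :> R.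
  rewrite E powR_invn // invf_lt1; last by apply: exprn_gt0.
  rewrite -natrX ltr1n; have := @ltn_expl 2 (v - m)%N isT; lia.
split; first exact: powR_ge0.
by split => //; split => // /(leq_trans hvm); rewrite ltnn.
Qed.

Lemma cond_eq {R : realType} (S k F : nat) (L : R) :
  F%:R <= L -> L < F.+1%:R ->
  ((S%:R : R) <= (k%:R : R) <= (S%:R : R) + L) = (S <= k <= S + F)%N.
Proof.
move=> h1 h2; rewrite ler_nat; case: (S <= k)%N => //=.
case: (leqP k (S + F)) => hk.
  apply/idP; have : (k%:R <= (S + F)%N%:R :> R) by rewrite ler_nat.
  rewrite natrD; lra.
apply/negbTE; rewrite -ltNge.
have : ((S + F).+1%:R <= k%:R :> R) by rewrite ler_nat.
rewrite -addnS natrD; lra.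
Qed.

Lemma window {R : realType} (f : nat -> R[i]) lo hi S F :
  (lo <= S)%N -> (S + F <= hi)%N ->
  \sum_(lo <= k < hi.+1) (if (S <= k <= S + F)%N then f k else 0) =
  \sum_(S <= k < (S + F).+1) f k.
Proof.
move=> h1 h2.
rewrite (@big_cat_nat _ _ _ S lo hi.+1) //=; last by lia.
rewrite (@big_cat_nat _ _ _ (S + F).+1 S hi.+1) //=; try lia.
rewrite big1_seq; last first.
  move=> k /andP[_]; rewrite mem_index_iota => hk; case: ifP => //; lia.
rewrite [X in _ + (_ + X)]big1_seq; last first.
  move=> k /andP[_]; rewrite mem_index_iota => hk; case: ifP => //; lia.
rewrite add0r addr0; apply: eq_big_nat => k hk; rewrite ifT //; lia.
Qed.

Lemma sum_ifb {R : realType} (r : seq nat) (b : bool) (g : nat -> R[i]) :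
  \sum_(i <- r) (if b then g i else 0) = if b then \sum_(i <- r) g i else 0.
Proof. by case: b => //; rewrite big1. Qed.

Lemma expn_ring (n : nat) : (2 ^+ n)%R = (2 ^ n)%N :> nat.
Proof. by elim: n => [//|n IH]; rewrite exprS IH expnS. Qed.


Lemma rect_sum_eq {R : realType} (a : nat -> nat -> R[i]) p q S T F G (L L' : R) :
  F%:R <= L -> L < F.+1%:R -> G%:R <= L' -> L' < G.+1%:R ->
  (2 ^ p <= S)%N -> (S + F <= 2 ^ p.+1)%N ->
  (2 ^ q <= T)%N -> (T + G <= 2 ^ q.+1)%N ->
  rect_sum a p q S%:R T%:R L L' =
  \sum_(S <= k < (S + F).+1) \sum_(T <= l < (T + G).+1) a k l.
Proof.
move=> h1 h2 h3 h4 h5 h6 h7 h8; rewrite /rect_sum.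
have E k l : (if ((S%:R : R) <= (k%:R : R) <= (S%:R : R) + L) &&
                 ((T%:R : R) <= (l%:R : R) <= (T%:R : R) + L') then a k l else 0) =
   if (S <= k <= S + F)%N then (if (T <= l <= T + G)%N then a k l else 0) else 0.
  by rewrite (@cond_eq _ S k F L h1 h2) (@cond_eq _ T l G L' h3 h4); case: (S <= k <= S + F)%N.
under eq_bigr do under eq_bigr do rewrite E.
under eq_bigr do rewrite sum_ifb.
have W := (@window _ (fun k => \sum_(2 ^ q <= l < (2 ^ q.+1).+1)
   (if (T <= l <= T + G)%N then a k l else 0)) (2 ^ p) (2 ^ p.+1) S F h5 h6).
simpl in W. rewrite W.
by apply: eq_bigr => k _; rewrite (@window _ (fun l => a k l)).
Qed.

Lemma cabsMn {R : realType} (x : R[i]) n : cabs (x *+ n) = cabs x *+ n.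
Proof. by apply: complexI; rewrite rmorphMn /= -!normE normrMn. Qed.

Lemma sum1_lb {R : realType} (f : nat -> R[i]) c S F (δ : R) :
  (forall k, (S <= k <= S + F)%N -> cabs (f k - c) <= δ) ->
  cabs (\sum_(S <= k < (S + F).+1) f k - c *+ F.+1) <= F.+1%:R * δ.
Proof.
move=> hd.
have E : \sum_(S <= k < (S + F).+1) f k - c *+ F.+1 =
         \sum_(S <= k < (S + F).+1) (f k - c).
  rewrite sumrB sumr_const_nat.
  by have -> : ((S + F).+1 - S = F.+1)%N by lia.
rewrite E.
have e1 := cabs_sum _ (index_iota S (S + F).+1) (fun k => f k - c).
have e2 : \sum_(S <= k < (S + F).+1) cabs (f k - c) <= \sum_(S <= k < (S + F).+1) δ.
  rewrite big_nat [X in _ <= X]big_nat; apply: ler_sum => k hk; apply: hd; lia.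
rewrite sumr_const_nat in e2.
have E2 : ((S + F).+1 - S = F.+1)%N by lia.
rewrite E2 -mulr_natl in e2.
exact: le_trans e1 e2.
Qed.

Lemma sum_lb {R : realType} (a : nat -> nat -> R[i]) S F T G P Q (γ δ : R) :
  γ <= cabs (a P Q) ->
  (forall k l, (S <= k <= S + F)%N -> (T <= l <= T + G)%N ->
     cabs (a k l - a P Q) <= δ) ->
  (F.+1%:R * G.+1%:R) * (γ - δ) <=
    cabs (\sum_(S <= k < (S + F).+1) \sum_(T <= l < (T + G).+1) a k l).
Proof.
move=> hg hd.
have H1 : forall k, (S <= k <= S + F)%N ->
  cabs (\sum_(T <= l < (T + G).+1) a k l - a P Q *+ G.+1) <= G.+1%:R * δ.
  by move=> k hk; apply: sum1_lb => l hl; apply: hd.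
have H2 := @sum1_lb _ (fun k => \sum_(T <= l < (T + G).+1) a k l) (a P Q *+ G.+1) S F _ H1.
set X := \sum_(S <= k < (S + F).+1) \sum_(T <= l < (T + G).+1) a k l in H2 *.
have H4 := cabs_tri (a P Q *+ G.+1 *+ F.+1) X 0.
rewrite !subr0 !cabsMn (cabs_sym _ X) in H4.
rewrite (_ : cabs (a P Q) *+ G.+1 *+ F.+1 = F.+1%:R * (G.+1%:R * cabs (a P Q))) in H4;
  last by rewrite !mulr_natl.
have hF : 0 <= F.+1%:R :> R by [].
have hG : 0 <= G.+1%:R :> R by [].
have H5 := ler_wpM2l hF (ler_wpM2l hG hg).
have -> : (F.+1%:R * G.+1%:R) * (γ - δ) = F.+1%:R * (G.+1%:R * γ) - F.+1%:R * (G.+1%:R * δ) :> R.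
  by ring.
move: H2 H4 H5.
set u1 := F.+1%:R * (G.+1%:R * γ).
set u2 := F.+1%:R * (G.+1%:R * δ).
set u3 := F.+1%:R * (G.+1%:R * cabs (a P Q)).
set u4 := cabs (X - _).
set u5 := cabs X.
move=> *; lra.
Qed.


Lemma fl_ge (m v : nat) : (2 ^ m <= (fl m v).+1 * 2 ^ v)%N.
Proof.
rewrite /fl; case: (leqP v m) => h.
  by rewrite mulSn -expnD subnK // leq_addl.
by rewrite mul1n leq_pexp2l //; exact: ltnW.
Qed.

Lemma fl_le (m v : nat) : (1 <= v)%N -> (2 ^ (v - 1) * fl m v <= 2 ^ m.-1)%N.
Proof.
move=> v1; rewrite /fl; case: (leqP v m) => h; last by rewrite muln0.
rewrite -expnD; apply: leq_pexp2l => //; lia.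
Qed.

Lemma in_rng {lo b d x hi : nat} :
  (lo <= b)%N -> (b <= x <= b + d)%N -> (b + d <= hi)%N -> (lo <= x <= hi)%N.
Proof. lia. Qed.

Lemma sub_rng {b d x : nat} : (b <= x <= b + d)%N -> (x - b <= d)%N.
Proof. lia. Qed.

Lemma finish {R : realType} {a : nat -> nat -> R[i]} (h : tends0 a)
    (C T β A : R) (v p q m n : nat) (good : nat -> bool) :
  (1 <= v)%N ->
  (2 ^ (v - 1) * fl m v <= 2 ^ p)%N -> (2 ^ (v - 1) * fl n v <= 2 ^ q)%N ->
  (gm_lhs a (2 ^ p)%N (2 ^ q)%N <= (C * T * A)%:E)%E ->
  0 < A -> 0 < β -> 0 <= C * T ->
  4 * (C * T) <= (2 ^ (v - 1))%N%:R * β ->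
  good (2 ^ p)%N -> (forall x, good x || good x.+1) ->
  (forall P Q, (2 ^ p <= P <= 2 ^ p.+1)%N -> (2 ^ q <= Q <= 2 ^ q.+1)%N ->
     good P -> β * A <= cabs (a P Q)) ->
  exists s t : R,
    rect_in_Q p q s t (2 `^ (m%:R - v%:R)) (2 `^ (n%:R - v%:R)) /\
    β / (4 * 4 ^+ v) * 2 ^+ (m + n) * A
      < cabs (rect_sum a p q s t (2 `^ (m%:R - v%:R)) (2 `^ (n%:R - v%:R))).
Proof.
move=> v1 hMF hMG hgm A0 b0 CT0 hv goodk0 goodS hlow.
set k0 := (2 ^ p)%N in hMF hgm goodk0 hlow *.
set l0 := (2 ^ q)%N in hMG hgm hlow *.
set M := (2 ^ (v - 1))%N in hMF hMG hv.
set F := fl m v in hMF *.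
set G := fl n v in hMG *.
have k01 : (1 <= k0)%N by rewrite expn_gt0.
have l01 : (1 <= l0)%N by rewrite expn_gt0.
have M0 : (0 < M)%N by rewrite expn_gt0.
have [t [u [ht [hu Hc]]]] := core h k0 l0 F G M (C * T * A) k01 l01 M0 hMF hMG hgm.
set S := (k0 + t * F)%N in Hc.
set T0 := (l0 + u * G)%N in Hc.
have hk2 : (2 ^ p.+1 = 2 * k0)%N by rewrite expnS.
have hl2 : (2 ^ q.+1 = 2 * l0)%N by rewrite expnS.
have hSF : (S + F <= 2 ^ p.+1)%N.
  rewrite hk2 /S; have := leq_mul ht (leqnn F); rewrite mulSn.
  move: hMF; set tf := (t * F)%N; set mf := (M * F)%N; lia.
have hTG : (T0 + G <= 2 ^ q.+1)%N.
  rewrite hl2 /T0; have := leq_mul hu (leqnn G); rewrite mulSn.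
  move: hMG; set tf := (u * G)%N; set mf := (M * G)%N; lia.
have hkS : (k0 <= S)%N by apply: leq_addr.
have hlT : (l0 <= T0)%N by apply: leq_addr.
pose P := if good S then S else S.+1.
have Fpos : ~~ good S -> (1 <= F)%N.
  move=> g; case: (posnP F) => // F0; move: g; rewrite /S F0 muln0 addn0 goodk0.
  by [].
have hPgood : good P.
  rewrite /P; case: ifP => // /negbT hn; have := goodS S; by rewrite (negbTE hn).
have hPS : (S <= P <= S + F)%N.
  rewrite /P; case: ifP => g; first by lia.
  have := Fpos (negbT g); lia.
have hT0 : (T0 <= T0 <= T0 + G)%N by rewrite leqnn leq_addr.
have hlowP : β * A <= cabs (a P T0).
  apply: hlow => //; [exact: in_rng hkS hPS hSF | exact: in_rng hlT hT0 hTG].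
have hosc : forall k l, (S <= k <= S + F)%N -> (T0 <= l <= T0 + G)%N ->
    cabs (a k l - a P T0) <= β * A / 2.
  move=> k l hk hl.
  have H1 := Hc (k - S)%N (l - T0)%N (sub_rng hk) (sub_rng hl).
  have H2 := Hc (P - S)%N 0%N (sub_rng hPS) (leq0n _).
  rewrite (subnKC (andP hk).1) (subnKC (andP hl).1) in H1.
  rewrite (subnKC (andP hPS).1) addn0 in H2.
  have H3 := cabs_tri (a k l) (a S T0) (a P T0).
  rewrite (cabs_sym (a k l) (a S T0)) in H3.
  have hA2 : 2 * (C * T * A) <= M%:R * (β * A / 2).
    have := ler_wpM2r (ltW (divr_gt0 A0 (ltr0Sn _ 1))) hv.
    have -> : 4 * (C * T) * (A / 2) = 2 * (C * T * A) by field.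
    by have -> : M%:R * β * (A / 2) = M%:R * (β * A / 2) by field.
  have Mp : 0 < M%:R :> R by rewrite ltr0n.
  rewrite -(ler_pM2l Mp).
  have := ler_wpM2l (ltW Mp) H3; rewrite mulrDr.
  move: H1 H2 hA2; rewrite /S /T0.
  set x1 := M%:R * cabs _.
  set x2 := M%:R * cabs _.
  set x3 := M%:R * cabs _.
  set y := M%:R * (β * A / 2).
  move=> *; lra.
have [hm1 [hm2 [hm3 hm4]]] := Lbounds (R:=R) m v.
have [hn1 [hn2 [hn3 hn4]]] := Lbounds (R:=R) n v.
have Erect := @rect_sum_eq _ a p q S T0 F G _ _ hm1 hm2 hn1 hn2 hkS hSF hlT hTG.
have Hsum := @sum_lb _ a S F T0 G P T0 (β * A) (β * A / 2) hlowP hosc.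
exists S%:R, T0%:R; split.
  rewrite /rect_in_Q !expn_ring; split; first by rewrite ler_nat.
  split.
    case: (leqP v m) => hvm.
      by rewrite hm3 // -natrD ler_nat.
    have F0 : F = 0%N by rewrite /F /fl ifF //; apply/negbTE; rewrite -ltnNge.
    have : (S + 1 <= 2 ^ p.+1)%N by rewrite /S F0 muln0 addn0 hk2; move: k01; clear; lia.
    rewrite -(ler_nat R) natrD; have := hm4 hvm; lra.
  split; first by rewrite ler_nat.
  case: (leqP v n) => hvn.
    by rewrite hn3 // -natrD ler_nat.
  have G0 : G = 0%N by rewrite /G /fl ifF //; apply/negbTE; rewrite -ltnNge.
  have : (T0 + 1 <= 2 ^ q.+1)%N by rewrite /T0 G0 muln0 addn0 hl2; move: l01; clear; lia.
  rewrite -(ler_nat R) natrD; have := hn4 hvn; lra.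
rewrite Erect.
have hN : (2 ^ (m + n) <= F.+1 * G.+1 * 4 ^ v)%N.
  have := leq_mul (fl_ge m v) (fl_ge n v).
  by rewrite -expnD mulnACA -expnMn.
have hNR : (2 : R) ^+ (m + n)%N <= F.+1%:R * G.+1%:R * 4 ^+ v.
  by move: hN; rewrite -(ler_nat R) natrX !natrM natrX.
set W := (4 : R) ^+ v in hNR *.
have W0 : 0 < W by apply: exprn_gt0.
set N := F.+1%:R * G.+1%:R in hNR Hsum *.
have N0 : 0 < N by rewrite /N mulr_gt0 // ltr0n.
have bA : 0 < β * A by apply: mulr_gt0.
have c0 : 0 <= β / (4 * W).
  by apply: ltW; apply: divr_gt0 => //; apply: mulr_gt0.
have St1 := ler_wpM2r (ltW A0) (ler_wpM2l c0 hNR).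
have St2 : β / (4 * W) * (N * W) * A = N * (β * A) / 4.
  by field; apply: lt0r_neq0.
rewrite St2 in St1.
have St3 : N * (β * A - β * A / 2) = N * (β * A) / 2 by field.
rewrite St3 in Hsum.
have z0 : 0 < N * (β * A) by apply: mulr_gt0.
move: St1 Hsum z0; set z := N * (β * A); set w := β / (4 * W) * _ * A.
move=> *; lra.
Qed.


Lemma cabs_le_add {R : realType} (x y : R[i]) : cabs y <= cabs x + cabs (x - y).
Proof. have := cabs_tri y x 0; rewrite !subr0 (cabs_sym y x); lra. Qed.

Lemma choose_v {R : realType} {K : R} : 0 <= K ->
  exists v0 : nat, (1 <= v0)%N /\ K <= (2 ^ (v0 - 1))%N%:R.
Proof.
move=> K0; have := archi_boundP K0; set n0 := Num.Def.archi_bound K => hK.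
exists n0.+1; split => //; rewrite subn1 /=.
apply: (le_trans (ltW hK)); rewrite ler_nat; apply: ltnW; exact: ltn_expl.
Qed.


Lemma pow_pos (k : nat) : (1 <= 2 ^ k)%N.
Proof. by rewrite expn_gt0. Qed.

Lemma partA {R : realType} (C T : R) (hC : 0 < C) (hT : 0 < T) :
  exists c v : R, 0 < c /\ 0 < v /\
    forall a : nat -> nat -> R[i], GM1 C a ->
    forall m n : nat, (1 <= m)%N -> (1 <= n)%N ->
      0 < Amax a m n ->
      Amax a m.-1 n.-1 <= T * Amax a m n ->
      exists s t : R,
        rect_in_Q m.-1 n.-1 s t (2 `^ (m%:R - v)) (2 `^ (n%:R - v)) /\
        c * 2 ^+ (m + n) * Amax a m n
          < cabs (rect_sum a m.-1 n.-1 s t (2 `^ (m%:R - v)) (2 `^ (n%:R - v))).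
Proof.
set β := 1 / ((1 + C) ^+ 2).
have b0 : 0 < β by apply: divr_gt0 => //; apply: exprn_gt0; lra.
have K0 : 0 <= 4 * (C * T) * (1 + C) ^+ 2.
  by apply: mulr_ge0; [apply: mulr_ge0; [lra | apply: mulr_ge0; lra] | apply: exprn_ge0; lra].
have [v0 [v1 hv0]] := choose_v K0.
have hv : 4 * (C * T) <= (2 ^ (v0 - 1))%N%:R * β.
  have := ler_wpM2r (ltW b0) hv0.
  have -> : 4 * (C * T) * (1 + C) ^+ 2 * β = 4 * (C * T).
    rewrite /β; field; apply: lt0r_neq0; lra.
  by [].
exists (β / (4 * 4 ^+ v0)), v0%:R; split.
  by apply: divr_gt0 => //; apply: mulr_gt0 => //; apply: exprn_gt0.
split; first by rewrite ltr0n.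
move=> a [ht gm] m n m1 n1 A0 hAT.
set A := Amax a m n in A0 hAT *.
have Em : (m.-1.+1 = m)%N by rewrite prednK.
have En : (n.-1.+1 = n)%N by rewrite prednK.
apply: (@finish R a ht C T β A v0 m.-1 n.-1 m n xpredT) => //.
- exact: (fl_le m v0 v1).
- exact: (fl_le n v0 v1).
- have g := gm _ _ (pow_pos m.-1) (pow_pos n.-1).
  apply: (le_trans g); rewrite lee_fin.
  rewrite -mulrA; apply: ler_wpM2l; first lra.
  apply: le_trans hAT; apply: Amax_ge; rewrite leqnn /= leq_pexp2l //.
- by apply: mulr_ge0; lra.
- move=> P Q hP hQ _.
  have P1 : (1 <= P)%N by apply: leq_trans (andP hP).1; rewrite expn_gt0.
  have Q1 : (1 <= Q)%N by apply: leq_trans (andP hQ).1; rewrite expn_gt0.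
  rewrite Em in hP; rewrite En in hQ.
  have hPm : (P <= 2 ^ m <= 2 * P)%N.
    have e : (2 ^ m = 2 * 2 ^ m.-1)%N by rewrite -expnS Em.
    move: hP; rewrite e; lia.
  have hQn : (Q <= 2 ^ n <= 2 * Q)%N.
    have e : (2 ^ n = 2 * 2 ^ n.-1)%N by rewrite -expnS En.
    move: hQ; rewrite e; lia.
  have S1 := @step _ a ht P Q (2 ^ m)%N (2 ^ n)%N _ P1 Q1 hPm hQn (gm P Q P1 Q1).
  have hAle : A <= (1 + C) ^+ 2 * cabs (a P Q).
    apply: Amax_le.
      by apply: mulr_ge0; [apply: exprn_ge0; lra | exact: cabs_ge0].
    move=> k l hk hl.
    have hk' : (2 ^ m <= k <= 2 * 2 ^ m)%N by rewrite -expnS.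
    have hl' : (2 ^ n <= l <= 2 * 2 ^ n)%N by rewrite -expnS.
    have S2 := @step _ a ht (2 ^ m)%N (2 ^ n)%N k l _ (pow_pos _) (pow_pos _) hk' hl'
       (gm _ _ (pow_pos m) (pow_pos n)).
    have T1 := cabs_le_add (a P Q) (a (2 ^ m)%N (2 ^ n)%N).
    have T2 := cabs_le_add (a (2 ^ m)%N (2 ^ n)%N) (a k l).
    have x0 := cabs_ge0 (a P Q).
    move: S1 S2 T1 T2 x0.
    set x := cabs (a P Q); set y := cabs (a (2 ^ m)%N (2 ^ n)%N); set z := cabs (a k l).
    set d1 := cabs (a P Q - _); set d2 := cabs (a (2 ^ m)%N (2 ^ n)%N - _).
    move=> S1 S2 T1 T2 x0.
    have hy : y <= (1 + C) * x by lra.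
    have hz : z <= (1 + C) * y by lra.
    have := ler_wpM2l (ltW (ltr_pwDl ltr01 (ltW hC) : 0 < 1 + C)) hy.
    rewrite expr2 -mulrA; lra.
  have := ler_wpM2l (ltW b0) hAle.
  have -> : β * ((1 + C) ^+ 2 * cabs (a P Q)) = cabs (a P Q).
    rewrite /β; field; apply: lt0r_neq0; lra.
  by [].
Qed.

Lemma even_half {P : nat} : ~~ odd P -> P = (2 * P./2)%N.
Proof.
move=> hP; rewrite -[X in X = _](odd_double_half P) (negbTE hP) add0n.
by rewrite -muln2 mulnC.
Qed.

Lemma L1 {k P : nat} : P = (2 * k)%N -> (k <= P <= 2 * k)%N.
Proof. lia. Qed.
Lemma L2 {k X : nat} : (X <= k <= 2 * X)%N -> (k <= 2 * X <= 2 * k)%N.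
Proof. lia. Qed.
Lemma L4 (X : nat) : (X <= 2 * X <= 2 * X)%N.
Proof. lia. Qed.
Lemma L6 (Q : nat) : (Q <= Q <= 2 * Q)%N.
Proof. lia. Qed.
Lemma L7 {X P k : nat} : P = (2 * k)%N -> (2 * X <= P <= 2 * (2 * X))%N ->
  (X <= k <= 2 * X)%N.
Proof. lia. Qed.

Lemma partB {R : realType} (C T : R) (hC : 0 < C) (hT : 0 < T) :
  exists c v : R, 0 < c /\ 0 < v /\
    forall a : nat -> nat -> R[i], GM2 C a ->
    forall m n : nat, (1 <= n)%N ->
      0 < Amax a m n ->
      Amax a m.+1 n.-1 <= T * Amax a m n ->
      exists s t : R,
        rect_in_Q m.+1 n.-1 s t (2 `^ (m%:R - v)) (2 `^ (n%:R - v)) /\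
        c * 2 ^+ (m + n) * Amax a m n
          < cabs (rect_sum a m.+1 n.-1 s t (2 `^ (m%:R - v)) (2 `^ (n%:R - v))).
Proof.
set β := 1 / ((1 + 2 * C) ^+ 2).
have b0 : 0 < β by apply: divr_gt0 => //; apply: exprn_gt0; lra.
have K0 : 0 <= 4 * (C * T) * (1 + 2 * C) ^+ 2.
  by apply: mulr_ge0; [apply: mulr_ge0; [lra | apply: mulr_ge0; lra] | apply: exprn_ge0; lra].
have [v0 [v1 hv0]] := choose_v K0.
have hv : 4 * (C * T) <= (2 ^ (v0 - 1))%N%:R * β.
  have := ler_wpM2r (ltW b0) hv0.
  have -> : 4 * (C * T) * (1 + 2 * C) ^+ 2 * β = 4 * (C * T).
    rewrite /β; field; apply: lt0r_neq0; lra.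
  by [].
exists (β / (4 * 4 ^+ v0)), v0%:R; split.
  by apply: divr_gt0 => //; apply: mulr_gt0 => //; apply: exprn_gt0.
split; first by rewrite ltr0n.
move=> a [ht gm] m n n1 A0 hAT.
set A := Amax a m n in A0 hAT *.
have En : (n.-1.+1 = n)%N by rewrite prednK.
apply: (@finish R a ht C T β A v0 m.+1 n.-1 m n (fun x => ~~ odd x)) => //.
- apply: (leq_trans (fl_le m v0 v1)); apply: leq_pexp2l => //; lia.
- exact: (fl_le n v0 v1).
- have g := gm _ _ (pow_pos m.+1) (pow_pos n.-1).
  apply: (le_trans g); rewrite lee_fin.
  rewrite -mulrA; apply: ler_wpM2l; first lra.
  apply: le_trans hAT; apply: Amax_ge; last by rewrite leqnn /= leq_pexp2l.
  by rewrite -expnS leq_pexp2l //= leqnn.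
- by apply: mulr_ge0; lra.
- by rewrite expnS oddM.
- by move=> x /=; case: (odd x).
- move=> P Q hP hQ hodd.
  have hPk := even_half hodd.
  set k := P./2 in hPk.
  rewrite En in hQ.
  have eM1 : (2 ^ m.+1 = 2 * 2 ^ m)%N by rewrite expnS.
  have eM2 : (2 ^ m.+2 = 2 * 2 ^ m.+1)%N by rewrite expnS.
  have eN : (2 ^ n = 2 * 2 ^ n.-1)%N by rewrite -expnS En.
  have eN1 : (2 ^ n.+1 = 2 * 2 ^ n)%N by rewrite expnS.
  have hk : (2 ^ m <= k <= 2 ^ m.+1)%N.
    by rewrite eM1; apply: (L7 hPk); rewrite -eM1 -eM2.
  have k1 : (1 <= k)%N by apply: leq_trans (andP hk).1; exact: pow_pos.
  have Q1 : (1 <= Q)%N by apply: leq_trans (andP hQ).1; exact: pow_pos.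
  have gk := gm k Q k1 Q1; rewrite -hPk in gk.
  have s1 := @step _ a ht k Q P Q _ k1 Q1 (L1 hPk) (L6 Q) gk.
  have s2 := @step _ a ht k Q (2 ^ m.+1)%N (2 ^ n)%N _ k1 Q1
     ltac:(rewrite eM1; apply: L2; rewrite -eM1 //)
     ltac:(rewrite eN; apply: L2; rewrite -eN //) gk.
  have gN := gm (2 ^ m)%N (2 ^ n)%N (pow_pos m) (pow_pos n).
  rewrite -expnS in gN.
  have s3 := @step _ a ht (2 ^ m)%N (2 ^ n)%N (2 ^ m.+1)%N (2 ^ n)%N _ (pow_pos m) (pow_pos n)
     ltac:(rewrite eM1; exact: L4) (L6 _) gN.
  have hAle : A <= (1 + 2 * C) ^+ 2 * cabs (a P Q).
    apply: Amax_le.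
      by apply: mulr_ge0; [apply: exprn_ge0; lra | exact: cabs_ge0].
    move=> k' l' hk' hl'.
    have s4 := @step _ a ht (2 ^ m)%N (2 ^ n)%N k' l' _ (pow_pos m) (pow_pos n)
      ltac:(rewrite -eM1 //) ltac:(rewrite -eN1 //) gN.
    have T1 := cabs_le_add (a P Q) (a k Q).
    have T2 := cabs_le_add (a k Q) (a (2 ^ m.+1)%N (2 ^ n)%N).
    have T3 := cabs_le_add (a (2 ^ m.+1)%N (2 ^ n)%N) (a (2 ^ m)%N (2 ^ n)%N).
    have T4 := cabs_le_add (a (2 ^ m)%N (2 ^ n)%N) (a k' l').
    rewrite (cabs_sym (a P Q)) in T1.
    rewrite (cabs_sym (a (2 ^ m.+1)%N (2 ^ n)%N)) in T3.
    have x0 := cabs_ge0 (a P Q).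
    move: s1 s2 s3 s4 T1 T2 T3 T4 x0.
    set g0 := cabs (a P Q); set g := cabs (a (2 ^ m.+1)%N (2 ^ n)%N).
    set z := cabs (a k' l').
    set d1 := cabs (a k Q - a P Q); set d2 := cabs (a k Q - _).
    set d3 := cabs (a (2 ^ m)%N (2 ^ n)%N - a (2 ^ m.+1)%N (2 ^ n)%N).
    set d4 := cabs (a (2 ^ m)%N (2 ^ n)%N - a k' l').
    set y1 := cabs (a k Q); set y2 := cabs (a (2 ^ m)%N (2 ^ n)%N).
    move=> s1 s2 s3 s4 T1 T2 T3 T4 x0.
    have hg : g <= (1 + 2 * C) * g0 by lra.
    have hz : z <= (1 + 2 * C) * g by lra.
    have := ler_wpM2l (ltW (_ : 0 < 1 + 2 * C)) hg.
    move=> /(_ ltac:(lra)).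
    rewrite expr2 -mulrA; lra.
  have := ler_wpM2l (ltW b0) hAle.
  have -> : β * ((1 + 2 * C) ^+ 2 * cabs (a P Q)) = cabs (a P Q).
    rewrite /β; field; apply: lt0r_neq0; lra.
  by [].
Qed.

Local Close Scope complex_scope.

Theorem lemma1 (R : realType) (C T : R) (hC : 0 < C) (hT : 0 < T) :
  (exists c v : R, 0 < c /\ 0 < v /\
    forall a : nat -> nat -> R[i], GM1 C a ->
    forall m n : nat, (1 <= m)%N -> (1 <= n)%N ->
      0 < Amax a m n ->
      Amax a m.-1 n.-1 <= T * Amax a m n ->
      exists s t : R,
        rect_in_Q m.-1 n.-1 s t (2 `^ (m%:R - v)) (2 `^ (n%:R - v)) /\
        c * 2 ^+ (m + n) * Amax a m n
          < cabs (rect_sum a m.-1 n.-1 s t (2 `^ (m%:R - v)) (2 `^ (n%:R - v))))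
  /\
  (exists c v : R, 0 < c /\ 0 < v /\
    forall a : nat -> nat -> R[i], GM2 C a ->
    forall m n : nat, (1 <= n)%N ->
      0 < Amax a m n ->
      Amax a m.+1 n.-1 <= T * Amax a m n ->
      exists s t : R,
        rect_in_Q m.+1 n.-1 s t (2 `^ (m%:R - v)) (2 `^ (n%:R - v)) /\
        c * 2 ^+ (m + n) * Amax a m n
          < cabs (rect_sum a m.+1 n.-1 s t (2 `^ (m%:R - v)) (2 `^ (n%:R - v)))).
Proof.
split; [exact: partA | exact: partB].
Qed.
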